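(* For every integer $d\geq 2$ there exist $\epsilon=\epsilon(d)>0$ and $\eta=\eta(d)>0$ such that the following holds. Let $X$ be a distance-regular graph of diameter $d$ on $n$ vertices and degree $k$. If $k_t\geq (1-\epsilon)n$ for some $t\in\{1,\dots,d\}$, then the zero-weight spectral radius $\xi$ of $X$ satisfies $\xi\leq k(1-\eta)$.
   Context: A connected graph $X$ of diameter $d$ is distance-regular if there are integers $a_i,b_i,c_i$ ($0\le i\le d$) such that for all vertices $v,w$ with $\mathrm{dist}(v,w)=i$, the vertex $w$ has exactly $c_i$ neighbours at distance $i-1$ from $v$, $a_i$ neighbours at distance $i$ from $v$, and $b_i$ neighbours at distance $i+1$ from $v$. Then $X$ is $k$-regular with $k=b_0$, $c_0=b_d=0$, $c_1=1$ and $a_i+b_i+c_i=k$. For $0\le i\le d$, $k_i$ denotes the number of vertices at distance exactly $i$ from a fixed vertex (independent of the vertex). If the eigenvalues of the adjacency matrix of a $k$-regular graph on $n$ vertices are $k=\xi_1\geq\xi_2\geq\dots\geq\xi_n$, the zero-weight spectral radius is $\xi=\max\{|\xi_i|:2\le i\le n\}$. *)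

(* Defs.v *)
From HB Require Import structures.
From mathcomp Require Import all_boot all_order all_algebra all_field.
Set Implicit Arguments. Unset Strict Implicit. Unset Printing Implicit Defensive.
Import Order.TTheory GRing.Theory Num.Theory.

Definition simple_graph (T : finType) (e : rel T) : Prop :=
  irreflexive e /\ symmetric e.

Fixpoint within (T : finType) (e : rel T) (i : nat) (x y : T) : bool :=
  if i is j.+1 then within e j x y || [exists z, within e j x z && e z y]
  else x == y.

(* Graph distance: least i with a walk of length <= i from x to y.
   (Every distance in a connected graph is < #|T|, so the search bound
   #|T| is harmless; unreachable pairs get the value #|T|.) *)
Definition dist (T : finType) (e : rel T) (x y : T) : nat :=
  find (fun i => within e i x y) (iota 0 #|T|).

Definition connected_graph (T : finType) (e : rel T) : Prop :=
  forall x y : T, connect e x y.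

Definition diameter (T : finType) (e : rel T) : nat :=
  \max_(x : T) \max_(y : T) dist e x y.

Definition kdist (T : finType) (e : rel T) (v : T) (i : nat) : nat :=
  #|[set w | dist e v w == i]|.

Definition distance_regular (T : finType) (e : rel T) (d : nat) : Prop :=
  [/\ simple_graph e, connected_graph e, diameter e = d &
   exists a b c : nat -> nat,
     forall i, i <= d -> forall v w : T, dist e v w = i ->
       [/\ #|[set u | e w u & (dist e v u).+1 == i]| = c i,
           #|[set u | e w u & dist e v u == i]| = a i &
           #|[set u | e w u & dist e v u == i.+1]| = b i]].

Definition adj_mx (T : finType) (e : rel T) : 'M[algC]_#|T| :=
  \matrix_(i, j) ((e (enum_val i) (enum_val j))%:R)%R.

Definition adj_spectrum (T : finType) (e : rel T) : seq algC :=
  sval (closed_field_poly_normal (char_poly (adj_mx e))).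

Definition zero_weight_spectral_radius (T : finType) (e : rel T) (k : nat)
  : algC :=
  (\big[Num.max/0]_(z <- rem (k%:R : algC) (adj_spectrum e)) `|z|)%R.

(* Main.v *)
Require Import Defs.
From HB Require Import structures.
From mathcomp Require Import all_boot all_order all_algebra all_field.
From mathcomp Require Import ring zify.
Import Order.TTheory GRing.Theory Num.Theory.
Set Implicit Arguments. Unset Strict Implicit. Unset Printing Implicit Defensive.
Local Open Scope ring_scope.
Local Open Scope sesquilinear_scope.

Section Graph.
Variables (T : finType) (e : rel T).
Hypothesis (esym : symmetric e) (eirr : irreflexive e) (econn : connected_graph e).

Lemma within_S i x y : within e i x y -> within e i.+1 x y.
Proof. by move=> h /=; rewrite h. Qed.

Lemma within_add i j x y : within e i x y -> within e (j + i) x y.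
Proof. by move=> h; elim: j => [|j IH] //; rewrite addSn; apply: within_S. Qed.

Lemma within_ext i x z y : within e i x z -> e z y -> within e i.+1 x y.
Proof. by move=> h1 h2 /=; apply/orP; right; apply/existsP; exists z; rewrite h1. Qed.

Lemma within_pre i x z y : e x z -> within e i z y -> within e i.+1 x y.
Proof.
move=> exz; elim: i y => [|i IH] y.
  by move=> /= /eqP <-; apply/orP; right; apply/existsP; exists x; rewrite eqxx.
case/orP=> [h|/existsP[w /andP[h1 h2]]]; first by apply: within_S; apply: IH.
by apply: within_ext (IH _ h1) h2.
Qed.

Lemma within_path p x : path e x p -> within e (size p) x (last x p).
Proof.
elim: p x => [|y p IH] x /=; first by rewrite eqxx.
by case/andP=> h1 h2; apply: within_pre h1 (IH _ h2).
Qed.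

Lemma within_conn x y : within e #|T|.-1 x y.
Proof.
have /connectP[p pth ->] := econn x y.
case/shortenP: pth => p' pth' uq _.
have h := within_path pth'.
have hs : (size p' <= #|T|.-1)%N.
  have := card_uniqP uq; rewrite /= => hc.
  have := max_card (mem (x :: p')); rewrite hc /=.
  by case: #|T|.
by have := within_add (#|T|.-1 - size p') h; rewrite subnK.
Qed.

Lemma card_gt0 (x : T) : (0 < #|T|)%N.
Proof. by apply/card_gt0P; exists x. Qed.

Lemma dist_lt x y : (dist e x y < #|T|)%N.
Proof.
rewrite /dist; set s := iota _ _.
have -> : #|T| = size s by rewrite size_iota.
rewrite -has_find; apply/hasP; exists #|T|.-1.
  by rewrite mem_iota /= add0n prednK ?ltnSn // (card_gt0 x).
exact: within_conn.
Qed.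

Lemma within_dist x y : within e (dist e x y) x y.
Proof.
have h := dist_lt x y.
have := @nth_find _ 0%N (fun i => within e i x y) (iota 0 #|T|).
rewrite nth_iota // add0n; apply.
by rewrite has_find size_iota.
Qed.

Lemma dist_le i x y : within e i x y -> (dist e x y <= i)%N.
Proof.
move=> h; case: (ltnP i #|T|) => hi; last by apply: ltnW; apply: leq_trans (dist_lt x y) hi.
rewrite leqNgt; apply/negP => hlt.
have := @before_find _ 0%N (fun i => within e i x y) (iota 0 #|T|) i hlt.
by rewrite nth_iota // add0n h.
Qed.

Lemma dist_not i x y : (i < dist e x y)%N -> ~~ within e i x y.
Proof. by move=> h; apply/negP => /dist_le; rewrite leqNgt h. Qed.

Lemma dist_edge v w u : e w u -> (dist e v u <= (dist e v w).+1)%N.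
Proof. by move=> h; apply: dist_le; apply: within_ext (within_dist v w) h. Qed.

Lemma dist_xx x : dist e x x = 0%N.
Proof. by apply/eqP; rewrite -leqn0; apply: dist_le => /=. Qed.

Lemma dist_eq0 x y : (dist e x y == 0%N) = (x == y).
Proof.
apply/eqP/eqP => [h|->]; last exact: dist_xx.
by have := within_dist x y; rewrite h => /eqP.
Qed.

Lemma dist_adj x y : e x y -> dist e x y = 1%N.
Proof.
move=> h; have := dist_edge x h; rewrite dist_xx => h1.
apply/eqP; rewrite eqn_leq h1 lt0n dist_eq0; apply/negP=> /eqP hxy.
by move: h; rewrite hxy eirr.
Qed.

Lemma dist_pred v w i : dist e v w = i.+1 -> exists u, e u w /\ dist e v u = i.
Proof.
move=> h; have := within_dist v w; rewrite h /=.
have -> : within e i v w = false by apply/negbTE/dist_not; rewrite h.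
case/existsP=> u /andP[h1 h2]; exists u; split => //.
have h3 := dist_le h1; have := dist_edge v h2; rewrite h ltnS => h4.
by apply/eqP; rewrite eqn_leq h3 h4.
Qed.

Lemma dist_nb v w u : e w u ->
  [|| (dist e v u).+1 == dist e v w, dist e v u == dist e v w | dist e v u == (dist e v w).+1].
Proof.
move=> h; have h1 := dist_edge v h.
have h2 := dist_edge v (etrans (esym _ _) h : e u w).
case: (ltngtP (dist e v u) (dist e v w)) => H.
- by rewrite eqn_leq H h2.
- by rewrite [_ == (_.+1)]eqn_leq H h1 !orbT.
- by rewrite ?H ?eqxx ?orbT.

Qed.

End Graph.
Lemma sum_enum (T : finType) (F : T -> algC) :
  \sum_(i < #|T|) F (enum_val i) = \sum_x F x.
Proof. by rewrite -(big_enum_val F). Qed.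

Lemma sum_indic (T : finType) (P Q : pred T) (x : algC) :
  \sum_(u | P u) (Q u)%:R * x = #|[set u | P u & Q u]|%:R * x.
Proof.
rewrite -big_distrl /=; congr (_ * _).
rewrite (bigID Q) /= [X in _ + X]big1 ?addr0; last by move=> u /andP[_ /negbTE ->].
rewrite (eq_bigr (fun _ => 1)); last by move=> u /andP[_ ->].
by rewrite sumr_const; congr (_ *+ _); apply: eq_card => u; rewrite inE.
Qed.

Lemma three (beta : nat -> algC) (x i : nat) : [|| x.+1 == i, x == i | x == i.+1] ->
  beta x = (x.+1 == i)%:R * beta i.-1 + (x == i)%:R * beta i + (x == i.+1)%:R * beta i.+1.
Proof.
case/or3P=> /eqP h.
- by rewrite -h eqxx (ltn_eqF (ltnSn x)) (ltn_eqF (leqnSn x.+1)) mul1r !mul0r !addr0.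
- by rewrite -h eqxx (gtn_eqF (ltnSn x)) (ltn_eqF (ltnSn x)) mul1r !mul0r addr0 add0r.
- by rewrite h eqxx (gtn_eqF (ltnSn i)) (gtn_eqF (leqnSn i.+1)) mul1r !mul0r !add0r.
Qed.

Section BM.
Variables (T : finType) (e : rel T) (d : nat) (a b c : nat -> nat).
Hypotheses (esym : symmetric e) (eirr : irreflexive e) (econn : connected_graph e)
  (hdiam : diameter e = d).
Hypothesis hdrg : forall i, (i <= d)%N -> forall v w : T, dist e v w = i ->
  [/\ #|[set u | e w u & (dist e v u).+1 == i]| = c i,
      #|[set u | e w u & dist e v u == i]| = a i &
      #|[set u | e w u & dist e v u == i.+1]| = b i].

Lemma dist_le_diam v w : (dist e v w <= d)%N.
Proof. rewrite -hdiam /diameter; apply: (leq_trans _ (leq_bigmax v)); exact: (leq_bigmax w). Qed.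

Lemma nb_sum v w (beta : nat -> algC) : \sum_(u | e w u) beta (dist e v u) =
  (c (dist e v w))%:R * beta (dist e v w).-1 + (a (dist e v w))%:R * beta (dist e v w)
  + (b (dist e v w))%:R * beta (dist e v w).+1.
Proof.
have [hc ha hb] := hdrg (dist_le_diam v w) (erefl (dist e v w)).
rewrite (eq_bigr (fun u => ((dist e v u).+1 == dist e v w)%:R * beta (dist e v w).-1
  + (dist e v u == dist e v w)%:R * beta (dist e v w)
  + (dist e v u == (dist e v w).+1)%:R * beta (dist e v w).+1)).
  by rewrite !big_split /= !sum_indic hc ha hb.
by move=> u hu; apply: three; apply: dist_nb.
Qed.

Definition isBM (M : 'M[algC]_#|T|) := exists beta : nat -> algC,
  forall i j, M i j = beta (dist e (enum_val i) (enum_val j)).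

Lemma BM_mulA M : isBM M -> isBM (M *m adj_mx e).
Proof.
case=> beta hb.
exists (fun i => (c i)%:R * beta i.-1 + (a i)%:R * beta i + (b i)%:R * beta i.+1).
move=> i j; rewrite !mxE -nb_sum.
rewrite (eq_bigr (fun l => beta (dist e (enum_val i) (enum_val l)) *
   (e (enum_val l) (enum_val j))%:R)); last by move=> l _; rewrite hb mxE.
rewrite (sum_enum (fun u => beta (dist e (enum_val i) u) * (e u (enum_val j))%:R)).
rewrite [RHS]big_mkcond /=; apply: eq_bigr => u _.
by rewrite esym; case: (e _ _); rewrite ?mulr1 ?mulr0.
Qed.

Lemma BM_1 : isBM 1%:M.
Proof.
exists (fun i => (i == 0)%N%:R) => i j; rewrite mxE dist_eq0 //.
by rewrite (inj_eq enum_val_inj).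
Qed.

Lemma BM_add M N : isBM M -> isBM N -> isBM (M + N).
Proof. by case=> f hf [g hg]; exists (fun i => f i + g i) => i j; rewrite mxE hf hg. Qed.

Lemma BM_scale x M : isBM M -> isBM (x *: M).
Proof. by case=> f hf; exists (fun i => x * f i) => i j; rewrite mxE hf. Qed.

Lemma BM_0 : isBM 0.
Proof. by exists (fun _ => 0) => i j; rewrite mxE. Qed.

Definition pw (m : nat) : 'M[algC]_#|T| := iter m (fun M => M *m adj_mx e) 1%:M.

Lemma BM_pw m : isBM (pw m).
Proof. by elim: m => [|m IH] /=; [apply: BM_1 | apply: BM_mulA]. Qed.

Lemma BM_sum (q : {poly algC}) : isBM (\sum_(m < size q) q`_m *: pw m).
Proof.
apply: (big_ind isBM); [exact: BM_0 | exact: BM_add |].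
by move=> m _; apply: BM_scale; apply: BM_pw.
Qed.

End BM.

Lemma lagrange (S : seq algC) (z : algC) :
  exists q : {poly algC}, forall x, x \in S -> q.[x] = (x == z)%:R.
Proof.
set S' := [seq y <- S | y != z].
exists ((\prod_(y <- S') (z - y))^-1 *: \prod_(y <- S') ('X - y%:P)) => x xS.
rewrite hornerZ.
have -> : (\prod_(y <- S') ('X - y%:P)).[x] = \prod_(y <- S') (x - y).
  by rewrite horner_prod; apply: eq_bigr => y _; rewrite hornerXsubC.
have [->|xz] := eqVneq x z.
  rewrite mulVf //; rewrite prodf_seq_neq0; apply/allP => y.
  by rewrite mem_filter subr_eq0 eq_sym => /andP[->].
apply/eqP; rewrite mulf_eq0 prodf_seq_eq0; apply/orP; right; apply/hasP.
by exists x; rewrite ?mem_filter ?xz ?xS ?subrr ?eqxx.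
Qed.

Section Spec.
Variables (T : finType) (e : rel T).
Hypotheses (esym : symmetric e).

Local Notation n := #|T|.
Local Notation A := (adj_mx e).
Local Notation P := (spectralmx A).
Local Notation D := (spectral_diag A).

Lemma A_herm : A \is hermsymmx.
Proof.
apply: realsym_hermsym.
  apply/is_hermitianmxP; rewrite expr0 scale1r; apply/matrixP => i j.
  by rewrite !mxE esym.
by apply/mxOverP => i j; rewrite mxE realn.
Qed.

Lemma P_unitary : P \is unitarymx.
Proof. exact: spectral_unitarymx. Qed.

Lemma A_decomp : A = P^t* *m diag_mx D *m P.
Proof.
have /orthomx_spectralP h := hermitian_normalmx A_herm.
by rewrite {1}h invmx_unitary // P_unitary.
Qed.

Lemma PPt : P *m P^t* = 1%:M.
Proof. exact/unitarymxP/P_unitary. Qed.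

Lemma PtP : P^t* *m P = 1%:M.
Proof. by have := mulmxKtV (1%:M : 'M_n) P_unitary (erefl _); rewrite mul1mx. Qed.

Lemma D_real j : D 0 j \is Num.real.
Proof. by have /mxOverP := hermitian_spectral_diag_real A_herm; apply. Qed.

Definition Cm (h : 'I_n -> algC) : 'M[algC]_n := P^t* *m diag_mx (\row_j h j) *m P.

Lemma Cm_ext h h' : (forall j, h j = h' j) -> Cm h = Cm h'.
Proof. by move=> hh; rewrite /Cm; congr (_ *m diag_mx _ *m _); apply/rowP => j; rewrite !mxE hh. Qed.

Lemma Cm_entry h i j : Cm h i j = \sum_l (P l i)^* * h l * P l j.
Proof.
rewrite /Cm mul_mx_diag !mxE; apply: eq_bigr => l _; rewrite !mxE.
by [].
Qed.

Lemma Cm_mulA h : Cm h *m A = Cm (fun j => h j * D 0 j).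
Proof.
rewrite /Cm [X in _ *m X]A_decomp !mulmxA mulmxtVK ?P_unitary //.
rewrite -[_ *m diag_mx _ *m diag_mx _]mulmxA mulmx_diag; congr (_ *m _ *m _).
by congr diag_mx; apply/rowP => j; rewrite !mxE.
Qed.

Lemma pw_Cm m : pw e m = Cm (fun j => D 0 j ^+ m).
Proof.
elim: m => [|m IH] /=.
  rewrite /Cm; have -> : \row_j (D 0 j ^+ 0) = const_mx 1 by apply/rowP => j; rewrite !mxE.
  by rewrite diag_const_mx mulmx1 PtP.
rewrite /pw /= -/(pw e m) IH Cm_mulA; by apply: Cm_ext => j; rewrite exprSr.
Qed.

Lemma Cm_poly (q : {poly algC}) :
  \sum_(m < size q) q`_m *: pw e m = Cm (fun j => q.[D 0 j]).
Proof.
apply/matrixP => i j; rewrite summxE Cm_entry.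
under eq_bigr do rewrite mxE pw_Cm Cm_entry mulr_sumr.
rewrite exchange_big /=; apply: eq_bigr => l _.
rewrite horner_coef mulr_sumr mulr_suml; apply: eq_bigr => m _.
by rewrite !mulrA [q`_m * _]mulrC.
Qed.

End Spec.

Lemma sq_split (x y : algC) : x \is Num.real -> y \is Num.real ->
  (x + y) ^+ 2 <= 2 * x ^+ 2 + 2 * y ^+ 2.
Proof.
move=> xr yr; rewrite -subr_ge0.
have -> : 2 * x ^+ 2 + 2 * y ^+ 2 - (x + y) ^+ 2 = (x - y) ^+ 2 by ring.
by rewrite -real_normK ?rpredB // exprn_ge0.
Qed.

Lemma normsq_sub (a b c : algC) : c^* = c -> c * c = 1 ->
  `|a - c * b| ^+ 2 = `|a| ^+ 2 + `|b| ^+ 2 - c * (a^* * b + (a^* * b)^*).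
Proof.
move=> hc hcc; rewrite !normCK !rmorphB !rmorphM /= hc conjCK.

transitivity (a * a^* + b * b^* - c * (a^* * b + a * b^*) + (c * c - 1) * (b * b^*)).
  by ring.
by rewrite hcc subrr mul0r addr0.
Qed.

Lemma normsq_tri (a w b c c' : algC) : `|c| = 1 ->
  `|a - (c * c') * b| ^+ 2 <= 2 * `|a - c * w| ^+ 2 + 2 * `|w - c' * b| ^+ 2.
Proof.
move=> hc.
have -> : a - (c * c') * b = (a - c * w) + c * (w - c' * b) by ring.
apply: le_trans (sq_split (normr_real (a - c * w)) (normr_real (w - c' * b))).
apply: lerXn2r; rewrite ?nnegrE ?addr_ge0 ?normr_ge0 //.
by apply: le_trans (ler_normD _ _) _; rewrite normrM hc mul1r.
Qed.

Lemma am_gm (a b : algC) : 2 * `|a^* * b| <= `|a| ^+ 2 + `|b| ^+ 2.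
Proof.
rewrite normrM norm_conjC -subr_ge0.
have -> : `|a| ^+ 2 + `|b| ^+ 2 - 2 * (`|a| * `|b|) = (`|a| - `|b|) ^+ 2 by ring.
by rewrite -real_normK ?rpredB ?normr_real // exprn_ge0.
Qed.

Lemma numeric (K Z B0 bt del M Q : algC) : 0 <= K -> 0 < B0 -> 3 * bt <= B0 ->
  2 * B0 - 2 * bt <= M * del -> K * del = 2 * B0 * (K - Z) -> 0 < M -> 3 * M <= Q ->
  K <= Q * (K - Z).
Proof.
move=> hK hB hbt hX hd hM hMQ.
have h1 : 4 * B0 <= 3 * (M * del).
  apply: le_trans (_ : _ <= 3 * (2 * B0 - 2 * bt)) _; last by rewrite ler_wpM2l ?ler0n.
  rewrite -subr_ge0.
  have -> : 3 * (2 * B0 - 2 * bt) - 4 * B0 = 2 * (B0 - 3 * bt) by ring.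
  by rewrite mulr_ge0 ?ler0n // subr_ge0.
have h2 : B0 * (4 * K) <= B0 * (6 * M * (K - Z)).
  have -> : B0 * (4 * K) = K * (4 * B0) by ring.
  have -> : B0 * (6 * M * (K - Z)) = 3 * M * (K * del) by rewrite hd; ring.
  have -> : 3 * M * (K * del) = K * (3 * (M * del)) by ring.
  by rewrite ler_wpM2l.
rewrite ler_pM2l // in h2.
have h3 : 2 * K <= 3 * M * (K - Z).
  rewrite -(ler_pM2l (_ : 0 < 2)) ?ltr0n //.
  have -> : 2 * (2 * K) = 4 * K by ring.
  by have -> : 2 * (3 * M * (K - Z)) = 6 * M * (K - Z) by ring.
have h4 : 0 <= K - Z.
  rewrite -(pmulr_rge0 _ (_ : 0 < 3 * M)); last by rewrite mulr_gt0 ?ltr0n.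
  by apply: le_trans h3; rewrite mulr_ge0 ?ler0n.
apply: le_trans (_ : _ <= 2 * K) _.
  by rewrite -subr_ge0 (_ : 2 * K - K = K) //; ring.
apply: le_trans h3 _.
by rewrite ler_wpM2r.
Qed.

Lemma sum_card (T : finType) (Q : pred T) (x : algC) :
  \sum_(u | Q u) x = #|[set u | Q u]|%:R * x.
Proof.
rewrite big_mkcond /= (eq_bigr (fun u => (Q u)%:R * x)); last first.
  by move=> u _; case: (Q u); rewrite ?mul1r ?mul0r.
have := sum_indic predT Q x; rewrite /= => ->; congr (_%:R * _).
Qed.

Lemma sum_nat_card (T : finType) (Q : pred T) :
  \sum_u ((Q u)%:R : algC) = #|[set u | Q u]|%:R.
Proof.
have := sum_card Q 1; rewrite mulr1 => <-; rewrite [RHS]big_mkcond /=.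
by apply: eq_bigr => u _; case: (Q u).
Qed.

Section Core.
Variables (T : finType) (e : rel T) (k : nat) (z : algC).
Hypotheses (esym : symmetric e) (eirr : irreflexive e) (econn : connected_graph e).
Hypothesis hreg : forall v, #|[set w | e v w]| = k.

Local Notation n := #|T|.
Local Notation A := (adj_mx e).
Local Notation P := (spectralmx A).
Local Notation D := (spectral_diag A).
Local Notation V := (@enum_val T T).

Definition hz (j : 'I_n) : algC := (D 0 j == z)%:R.
Definition Ez := Cm e hz.
Definition gz (l i : 'I_n) := hz l * P l i.

Lemma hz_conj j : (hz j)^* = hz j.
Proof. by rewrite /hz conjC_nat. Qed.

Lemma hz_sq j : hz j * hz j = hz j.
Proof. by rewrite /hz; case: (_ == _); rewrite ?mulr1 ?mulr0. Qed.

Lemma Ez_entry i j : Ez i j = \sum_l (gz l i)^* * gz l j.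
Proof.
rewrite /Ez Cm_entry; apply: eq_bigr => l _.
rewrite /gz rmorphM /= hz_conj.
by rewrite -[hz l in LHS]hz_sq; ring.
Qed.

Variable beta : nat -> algC.
Hypothesis hbeta : forall i j, Ez i j = beta (dist e (V i) (V j)).

Lemma Ez_diag i : Ez i i = beta 0.
Proof. by rewrite hbeta dist_xx. Qed.

Lemma beta0_eq i : beta 0 = \sum_l `|gz l i| ^+ 2.
Proof. by rewrite -(Ez_diag i) Ez_entry; apply: eq_bigr => l _; rewrite normCK mulrC. Qed.

Lemma beta0_ge0 (i : 'I_n) : 0 <= beta 0.
Proof. by rewrite (beta0_eq i); apply: sumr_ge0 => l _; rewrite exprn_ge0. Qed.

Lemma beta0_conj (i : 'I_n) : (beta 0)^* = beta 0.
Proof. exact/conj_Creal/ger0_real/(beta0_ge0 i). Qed.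

Lemma normE_le i j : `|Ez i j| <= beta 0.
Proof.
rewrite -(ler_pM2l (ltr0n _ 2)) Ez_entry.
apply: le_trans (_ : _ <= \sum_l (`|gz l i| ^+ 2 + `|gz l j| ^+ 2)) _.
  apply: le_trans (ler_wpM2l (ler0n _ 2) (ler_norm_sum _ _ _)) _.
  by rewrite mulr_sumr; apply: ler_sum => l _; apply: am_gm.
by rewrite big_split /= -beta0_eq -beta0_eq mulr2n mulrDl mul1r.
Qed.

Definition Xf i j c := \sum_l `|gz l i - c * gz l j| ^+ 2.

Lemma Xf_ge0 i j c : 0 <= Xf i j c.
Proof. by apply: sumr_ge0 => l _; rewrite exprn_ge0. Qed.

Lemma Xf_eq i j c : c^* = c -> c * c = 1 ->
  Xf i j c = 2 * beta 0 - c * (Ez i j + (Ez i j)^*).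
Proof.
move=> hc hcc; rewrite /Xf.
under eq_bigr do rewrite normsq_sub //.
rewrite sumrB big_split /= -!beta0_eq -mulr_sumr Ez_entry rmorph_sum /=.
by rewrite big_split /= mulr2n mulrDl mul1r.
Qed.

Lemma Xf_tri i m j c c' : `|c| = 1 ->
  Xf i j (c * c') <= 2 * Xf i m c + 2 * Xf m j c'.
Proof.
move=> hc; rewrite /Xf !mulr_sumr -big_split /=.
by apply: ler_sum => l _; apply: normsq_tri.
Qed.

Definition sg (x : algC) : algC := if 0 <= x then 1 else -1.

Lemma sg_conj x m : (sg x ^+ m)^* = sg x ^+ m.
Proof.
have h : (sg x)^* = sg x by rewrite /sg; case: ifP => _; rewrite ?rmorphN1 ?rmorph1.
by rewrite rmorphXn /= h.
Qed.

Lemma sg_sq x m : sg x ^+ m * sg x ^+ m = 1.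
Proof. by rewrite -exprMn /sg; case: ifP => _; rewrite ?mulr1 ?mulrNN ?mulr1 expr1n. Qed.

Lemma sg_norm x m : `|sg x ^+ m| = 1.
Proof. by rewrite normrX /sg; case: ifP => _; rewrite ?normrN normr1 expr1n. Qed.

Definition delta := 2 * beta 0 - sg z * (beta 1 + (beta 1)^*).

Lemma Xf_edge i j : e (V i) (V j) -> Xf i j (sg z) = delta.
Proof.
move=> h; have := Xf_eq i j (sg_conj z 1) (sg_sq z 1); rewrite expr1 => ->.
by rewrite hbeta dist_adj.
Qed.

Lemma walk m : forall i j, dist e (V i) (V j) = m ->
  Xf i j (sg z ^+ m) <= (4 ^ m - 1)%:R * delta.
Proof.
elim: m => [|m IH] i j.
  move/eqP; rewrite dist_eq0 // => /eqP /enum_val_inj ->.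
  rewrite /Xf big1 ?mul0r // => l _.
  by rewrite expr0 mul1r subrr normr0 expr0n.
case/(dist_pred econn) => u [hu hd].
have hr : V (enum_rank u) = u by rewrite enum_rankK.
have h1 := IH i (enum_rank u); rewrite hr in h1; have {}h1 := h1 hd.
have h2 := @Xf_edge (enum_rank u) j; rewrite hr in h2; have {}h2 := h2 hu.
have hd0 : 0 <= delta by rewrite -h2 Xf_ge0.
rewrite exprSr; apply: le_trans (@Xf_tri i (enum_rank u) j _ (sg z) (sg_norm z m)) _.
rewrite h2; apply: le_trans (_ : _ <= 2 * ((4 ^ m - 1)%:R * delta) + 2 * delta) _.
  by rewrite lerD2r ler_wpM2l.
have -> : 2 * ((4 ^ m - 1)%:R * delta) + 2 * delta = (2 * 4 ^ m)%:R * delta.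
  rewrite natrM natrB ?expn_gt0 //; ring.
apply: ler_wpM2r => //; rewrite ler_nat expnS.
have : (1 <= 4 ^ m)%N by rewrite expn_gt0.
move: (4 ^ m)%N => x hx; lia.
Qed.

Lemma rowsumA (l : 'I_n) : \sum_j A l j = k%:R.
Proof.
under eq_bigr do rewrite mxE.
by rewrite (sum_enum (fun u => (e (V l) u)%:R)) sum_nat_card hreg.
Qed.

Lemma eig_rel (i : 'I_n) : k%:R * beta 1 = z * beta 0.
Proof.
have h := congr1 (fun M : 'M_n => M i i) (Cm_mulA esym hz).
have h2 : Cm e (fun j => hz j * D 0 j) = Cm e (fun j => z * hz j).
  by apply: Cm_ext => j; rewrite /hz; case: eqP => [->|_]; rewrite ?mul1r ?mulr1 ?mul0r ?mulr0.
rewrite /= h2 Cm_entry mxE in h.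
transitivity (\sum_l Ez i l * A l i).
  rewrite (eq_bigr (fun l => beta (dist e (V i) (V l)) * (e (V l) (V i))%:R)); last first.
    by move=> l _; rewrite hbeta mxE.
  rewrite (sum_enum (fun u => beta (dist e (V i) u) * (e u (V i))%:R)).
  rewrite (eq_bigr (fun u => (e (V i) u)%:R * beta 1)); last first.
    move=> u _; rewrite esym; case h3: (e (V i) u); rewrite ?mul1r ?mulr1 ?mul0r ?mulr0 //.
    by rewrite dist_adj.
  by rewrite -mulr_suml sum_nat_card hreg.
rewrite [LHS]h -(Ez_diag i) /Ez Cm_entry mulr_sumr; apply: eq_bigr => l _; ring.
Qed.

Lemma PA_eq : P *m A = diag_mx D *m P.
Proof. by rewrite [X in _ *m X](A_decomp esym) !mulmxA PPt mul1mx. Qed.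

Lemma P_rowsum l : D 0 l * \sum_j P l j = k%:R * \sum_j P l j.
Proof.
transitivity (\sum_j (diag_mx D *m P) l j).
  by rewrite mul_diag_mx; under [RHS]eq_bigr do rewrite mxE; rewrite mulr_sumr.
rewrite -PA_eq; under eq_bigr do rewrite mxE.
rewrite exchange_big /=.
under eq_bigr do rewrite -mulr_sumr rowsumA.
by rewrite mulr_sumr; apply: eq_bigr => m _; rewrite mulrC.
Qed.

Lemma rowsum0 (hzk : z != k%:R) v : \sum_u beta (dist e v u) = 0.
Proof.
rewrite -(sum_enum (fun u => beta (dist e v u))).
have hv : V (enum_rank v) = v by rewrite enum_rankK.
transitivity (\sum_j Ez (enum_rank v) j).
  by apply: eq_bigr => j _; rewrite hbeta hv.
under eq_bigr do rewrite /Ez Cm_entry.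
rewrite exchange_big /=; apply: big1 => l _.
rewrite -mulr_sumr; rewrite /hz; case: eqP => [hl|_]; last by rewrite mulr0 mul0r.
have := P_rowsum l; rewrite hl => /eqP; rewrite -subr_eq0 -mulrBl mulf_eq0 subr_eq0.
by rewrite (negbTE hzk) /= => /eqP ->; rewrite mulr0.
Qed.

Lemma beta_le v u : `|beta (dist e v u)| <= beta 0.
Proof.
have := normE_le (enum_rank v) (enum_rank u).
by rewrite hbeta !enum_rankK.
Qed.

Lemma betat_bound (hzk : z != k%:R) v t :
  `|beta t| * (kdist e v t)%:R <= (n - kdist e v t)%:R * beta 0.
Proof.
have h := rowsum0 hzk v.
rewrite (bigID (fun u => dist e v u == t)) /= in h.
have h1 : \sum_(u | dist e v u == t) beta (dist e v u) = (kdist e v t)%:R * beta t.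
  rewrite (eq_bigr (fun _ => beta t)); last by move=> u /eqP ->.
  by rewrite sum_card.
rewrite h1 in h; move/eqP: h; rewrite addr_eq0 => /eqP h.
rewrite mulrC -normr_nat -normrM h normrN.
apply: le_trans (ler_norm_sum _ _ _) _.
apply: le_trans (ler_sum (G := fun _ => beta 0) _ _) _.
  by move=> u _; apply: beta_le.
rewrite sum_card; apply: ler_wpM2r; first exact: (le_trans (normr_ge0 _) (beta_le v v)).
rewrite ler_nat.
have hc := cardsC [set w | dist e v w == t].
have -> : #|[set u | dist e v u != t]| = #|~: [set w | dist e v w == t]|.
  by apply: eq_card => u; rewrite !inE.
by rewrite /kdist -hc addKn.
Qed.

Lemma beta0_gt0 j0 : D 0 j0 = z -> 0 < beta 0.
Proof.
move=> hD; rewrite lt_def (beta0_ge0 j0) andbT; apply/eqP => h0.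
have hP : forall i, P j0 i = 0.
  move=> i; have := beta0_eq i; rewrite h0 => h.
  have := psumr_eq0P (fun l _ => exprn_ge0 2 (normr_ge0 (gz l i))) (sym_eq h) (i := j0) isT.
  move/eqP; rewrite expf_eq0 /= normr_eq0 /gz /hz hD eqxx mul1r => /eqP //.
have := congr1 (fun M : 'M[algC]_n => M j0 j0) (@PPt T e); rewrite !mxE eqxx /=.
rewrite big1; first by move/eqP; rewrite eq_sym oner_eq0.
by move=> i _; rewrite !mxE hP mul0r.
Qed.

Lemma sg_mul (zr : z \is Num.real) : sg z * z = `|z|.
Proof.
rewrite /sg; case: ifP => hz0; first by rewrite mul1r ger0_norm.
have : z < 0 by rewrite real_ltNge ?hz0.
by move=> hlt; rewrite ltr0_norm // mulN1r.
Qed.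

Lemma delta_eq (zr : z \is Num.real) (j0 : 'I_n) :
  k%:R * delta = 2 * beta 0 * (k%:R - `|z|).
Proof.
have e1 := eig_rel j0.
have e2 : k%:R * (beta 1)^* = z * beta 0.
  have := congr1 (@Num.conj _) e1; rewrite !rmorphM /= conjC_nat => ->.
  by rewrite (conj_Creal zr) (beta0_conj j0).
rewrite /delta.
transitivity (2 * k%:R * beta 0 - sg z * (k%:R * beta 1 + k%:R * (beta 1)^*)); first by ring.
rewrite e1 e2.
transitivity (2 * k%:R * beta 0 - 2 * (sg z * z) * beta 0); first by ring.
by rewrite sg_mul //; ring.
Qed.

Lemma main_bound (hzk : z != k%:R) (zr : z \is Num.real) (j0 : 'I_n) (hD : D 0 j0 = z) t d
  (ht1 : (1 <= t)%N) (htd : (t <= d)%N)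
  (hk : forall v, (1 - (4 : algC)^-1) * n%:R <= (kdist e v t)%:R) :
  k%:R <= (3 * 4 ^ d)%:R * (k%:R - `|z|).
Proof.
pose v0 := V j0.
have hn : (0 < n)%N by apply: leq_ltn_trans (leq0n j0) (ltn_ord j0).
have hkt : (3 * n <= 4 * kdist e v0 t)%N.
  have := hk v0; rewrite -(ler_pM2l (_ : 0 < 4)) ?ltr0n // mulrA.
  rewrite (_ : 4 * (1 - 4^-1) = 3); last by field; rewrite ?pnatr_eq0.
  by rewrite -!natrM ler_nat.
have kt_gt0 : (0 < kdist e v0 t)%N by lia.
have [w] : exists w, w \in [set w | dist e v0 w == t] by apply/card_gt0P.
rewrite inE => /eqP hw.
pose j := enum_rank w.
have hVj : V j = w by rewrite enum_rankK.
have hwalk : Xf j0 j (sg z ^+ t) <= (4 ^ t - 1)%:R * delta by apply: walk; rewrite hVj.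
have hX := Xf_eq j0 j (sg_conj z t) (sg_sq z t).
rewrite hbeta hVj hw in hX.
have hr : sg z ^+ t * (beta t + (beta t)^*) \is Num.real.
  have -> : sg z ^+ t * (beta t + (beta t)^*) = 2 * beta 0 - Xf j0 j (sg z ^+ t).
    by rewrite hX; ring.
  by rewrite rpredB ?rpredM ?realn ?ger0_real ?Xf_ge0 ?(beta0_ge0 j0).
have hlow : 2 * beta 0 - 2 * `|beta t| <= Xf j0 j (sg z ^+ t).
  rewrite hX lerD2l lerN2; apply: le_trans (real_ler_norm hr) _.
  rewrite normrM sg_norm mul1r; apply: le_trans (ler_normD _ _) _.
  by rewrite norm_conjC mulr2n mulrDl mul1r.
have hbt : 3 * `|beta t| <= beta 0.
  have hb := betat_bound hzk v0 t.
  have h3 : (3 * (n - kdist e v0 t) <= kdist e v0 t)%N by lia.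
  rewrite -(ler_pM2r (_ : 0 < (kdist e v0 t)%:R)) ?ltr0n //.
  apply: le_trans (_ : _ <= 3 * ((n - kdist e v0 t)%:R * beta 0)) _.
    by rewrite -mulrA ler_wpM2l ?ler0n.
  rewrite mulrA -natrM mulrC ler_wpM2l ?(beta0_ge0 j0) //.
  by rewrite ler_nat.
apply: (@numeric _ _ (beta 0) `|beta t| delta ((4 ^ t - 1)%:R)).
- exact: ler0n.
- exact: beta0_gt0 hD.
- exact: hbt.
- exact: le_trans hlow hwalk.
- exact: (delta_eq zr j0).
- rewrite ltr0n subn_gt0 (leq_trans _ (leq_pexp2l _ ht1)) //.
- rewrite -natrM ler_nat leq_mul2l /=; apply: leq_trans (leq_subr _ _) _.
  by rewrite leq_pexp2l.
Qed.

Lemma k_double (hzk : z = k%:R) (hk0 : (0 < k)%N) (j1 j2 : 'I_n) (hj : j1 != j2)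
  (h1 : D 0 j1 = z) (h2 : D 0 j2 = z) : False.
Proof.
have hs : sg z = 1 by rewrite /sg hzk ler0n.
have hb1 : beta 1 = beta 0.
  have := eig_rel j1; rewrite hzk => /mulfI; apply; by rewrite pnatr_eq0 -lt0n.
have hd0 : delta = 0 by rewrite /delta hs hb1 (beta0_conj j1); ring.
have hX0 : forall i j, Xf i j 1 = 0.
  move=> i j; apply/eqP; rewrite eq_le Xf_ge0 andbT.
  by have := @walk (dist e (V i) (V j)) i j erefl; rewrite hs expr1n hd0 mulr0.
have hc : forall l, D 0 l = z -> forall i, P l i = P l j1.
  move=> l hl i.
  have := psumr_eq0P (fun l _ => exprn_ge0 2 (normr_ge0 (gz l i - 1 * gz l j1))) (hX0 i j1) (i := l) isT.
  move/eqP; rewrite expf_eq0 /= normr_eq0 mul1r subr_eq0 /gz /hz hl eqxx !mul1r.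
  by move/eqP.
have hent : forall a b, D 0 a = z -> D 0 b = z ->
    (P *m P^t*) a b = n%:R * (P a j1 * (P b j1)^*).
  move=> a b ha hb; rewrite mxE.
  under eq_bigr do rewrite !mxE (hc a ha) (hc b hb).
  by rewrite sumr_const card_ord mulr_natl.
rewrite (@PPt T e) in hent.
have e12 := hent j1 j2 h1 h2; have e11 := hent j1 j1 h1 h1; have e22 := hent j2 j2 h2 h2.
rewrite !mxE in e12 e11 e22; rewrite eqxx in e11 e22; rewrite (negbTE hj) in e12.
have hn0 : n%:R != 0 :> algC by rewrite pnatr_eq0 -lt0n (leq_ltn_trans (leq0n j1) (ltn_ord j1)).
move/eqP: e12; rewrite eq_sym mulf_eq0 (negbTE hn0) /= mulf_eq0 conjC_eq0.
case/orP => /eqP h0.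
  by move: e11; rewrite h0 mul0r mulr0 => /eqP; rewrite pnatr_eq0.
by move: e22; rewrite eqxx h0 conjC0 mulr0 mulr0 => /eqP; rewrite pnatr_eq0.
Qed.


End Core.

Lemma char_poly_conj n (Q Q' B : 'M[algC]_n) : Q' *m Q = 1%:M ->
  char_poly (Q' *m B *m Q) = char_poly B.
Proof.
move=> hQ; rewrite /char_poly /char_poly_mx.
have -> : 'X%:M - map_mx polyC (Q' *m B *m Q) =
    map_mx polyC Q' *m ('X%:M - map_mx polyC B) *m map_mx polyC Q.
  rewrite mulmxBr mulmxBl !map_mxM; congr (_ - _).
  rewrite mul_mx_scalar -scalemxAl -map_mxM.
  have := congr1 (map_mx polyC) hQ; rewrite map_mx1 => ->.
  by rewrite scalemx1.
rewrite !det_mulmx mulrAC -det_mulmx -map_mxM.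
have := congr1 (map_mx polyC) hQ; rewrite map_mx1 => ->.
by rewrite det1 mul1r.
Qed.

Lemma two_idx n (P : pred 'I_n) : (1 < count P (enum 'I_n))%N ->
  exists j1 j2, [/\ j1 != j2, P j1 & P j2].
Proof.
rewrite -size_filter.
have : uniq (filter P (enum 'I_n)) by rewrite filter_uniq ?enum_uniq.
have hm : forall x, x \in filter P (enum 'I_n) -> P x by move=> x; rewrite mem_filter => /andP[].
case: (filter P (enum 'I_n)) hm => [|x [|y r]] hm //= /andP[hx _] _.
exists x, y; split; first by apply: contraNneq hx => ->; rewrite mem_head.
  by apply: hm; rewrite mem_head.
by apply: hm; rewrite inE mem_head orbT.
Qed.

Close Scope sesquilinear_scope.
Unset Implicit Arguments.

Theorem theorem3 (d : nat) (hd : (2 <= d)%N) :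
  exists eps eta : algC, 0 < eps /\ 0 < eta /\
    forall (T : finType) (e : rel T) (k : nat),
      distance_regular e d ->
      (forall v : T, #|[set w | e v w]| = k) ->
      (exists t, [/\ (1 <= t <= d)%N &
                     forall v : T, (1 - eps) * (#|T|%:R) <= (kdist e v t)%:R]) ->
      zero_weight_spectral_radius e k <= k%:R * (1 - eta).
Proof.
exists (4^-1), ((3 * 4 ^ d)%:R)^-1; split; first by rewrite invr_gt0 ltr0n.
split; first by rewrite invr_gt0 ltr0n muln_gt0 expn_gt0.
move=> T e k [[eirr esym] econn hdiam [a [b [c hdrg]]]] hreg [t [/andP [ht1 htd] hk]].
have hcp : char_poly (adj_mx e) =
    \prod_(j < #|T|) ('X - (spectral_diag (adj_mx e) 0 j)%:P).
  rewrite {1}(A_decomp esym) char_poly_conj ?PtP // char_poly_trig ?diag_mx_is_trig //.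
  by apply: eq_bigr => j _; rewrite mxE eqxx mulr1n.
have hperm : perm_eq (adj_spectrum e)
    [seq spectral_diag (adj_mx e) 0 j | j <- enum 'I_#|T|].
  apply: prod_XsubC_eq; rewrite big_map big_enum /= -hcp.
  rewrite /adj_spectrum; case: closed_field_poly_normal => s /= ->.
  by rewrite (monicP (char_poly_monic _)) scale1r.
rewrite /zero_weight_spectral_radius big_seq.
apply: (big_ind (fun x => x <= k%:R * (1 - ((3 * 4 ^ d)%:R)^-1))).
- rewrite mulr_ge0 ?ler0n // subr_ge0 invf_le1 ?ltr0n ?muln_gt0 ?expn_gt0 //.
  by rewrite ler1n muln_gt0 expn_gt0.
- by move=> x y hx hy; rewrite /Order.max; case: ifP.
move=> z hzin.
have zs : z \in adj_spectrum e := mem_rem hzin.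
rewrite (perm_mem hperm) in zs; case/mapP: zs => j0 _ hD.
have zr : z \is Num.real by rewrite hD (D_real esym).
have [q hq] := lagrange [seq spectral_diag (adj_mx e) 0 j | j <- enum 'I_#|T|] z.
have hBM := BM_sum esym econn hdiam hdrg q.
rewrite (Cm_poly esym) (@Cm_ext _ e _ (@hz _ e z)) in hBM; last first.
  by move=> j; rewrite hq ?map_f ?mem_enum.
case: hBM => beta hbeta.
have hD' : spectral_diag (adj_mx e) 0 j0 = z by rewrite hD.
case: (eqVneq z k%:R) => hzk.
  case: (posnP k) => hk0.
    by rewrite hzk hk0 normr0 mul0r.
  exfalso.
  have hc : (1 < count_mem (k%:R : algC) (adj_spectrum e))%N.
    have hks : (k%:R : algC) \in adj_spectrum e by rewrite -hzk; apply: mem_rem hzin.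
    rewrite (permP (perm_to_rem hks)) /= eqxx add1n ltnS.
    by rewrite -has_count has_pred1 -{1}hzk.
  rewrite (permP hperm) count_map in hc.
  have [j1 [j2 [hj h1 h2]]] := two_idx hc.
  move/eqP: h1; rewrite -hzk => h1; move/eqP: h2; rewrite -hzk => h2.
  exact: (k_double esym eirr econn hreg hbeta hzk hk0 hj h1 h2).
have := main_bound esym eirr econn hreg hbeta hzk zr hD' ht1 htd hk.
set Q := ((3 * 4 ^ d)%:R : algC) => h.
have hQ : 0 < Q by rewrite ltr0n muln_gt0 expn_gt0.
rewrite -subr_ge0.
have -> : k%:R * (1 - Q^-1) - `|z| = (Q * (k%:R - `|z|) - k%:R) / Q.
  by field; rewrite ?pnatr_eq0 ?expn_eq0.
by apply: divr_ge0; [rewrite subr_ge0 | exact: ltW].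
Qed.
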